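(* Let $\sigma$ be a reasonable strategy of player $0$ in the escape arena $\mathcal{A}_\bot$. If there is a vertex $s\in W_0$ with $\mathcal{V}_\sigma(s)\prec\infty$, then $\sigma$ has at least one strict improvement, i.e. $S_\sigma\neq\emptyset$.
   Context: Parity game arena: $\mathcal{A}=(V,E,o,c)$ with $V$ finite, $E\subseteq V\times V$, every vertex has a successor, owner map $o:V\to\{0,1\}$, colouring $c:V\to\{0,\dots,d-1\}$; $V_i=o^{-1}(i)$. An infinite vertex sequence is won by player $0$ iff the largest colour occurring infinitely often is even. A cycle is $i$-dominated if its largest colour has parity $i$. $W_0$ is the set of vertices from which player $0$ has a winning strategy in the parity game on $\mathcal{A}$. Escape arena $\mathcal{A}_\bot$: vertices $V\cup\{\bot\}$, edges $E\cup(V_0\times\{\bot\})$, $\bot$ owned by player $0$ with no outgoing edges. $E_0$ = edges of $\mathcal{A}_\bot$ leaving $V_0$, $E_1=E\cap(V_1\times V)$. A strategy of player $i$ is a set $\sigma\subseteq E_i$ with $s\sigma\neq\emptyset$ for all $s\in V_i$. $\mathcal{A}_\bot|_{\sigma,\tau}$ has edges $\sigma\cup\tau$, $\mathcal{A}_\bot|_\sigma$ has edges $\sigma\cup E_1$; plays are maximal paths. Colour profiles $\mathcal{P}=\mathbb{Z}^d\cup\{-\infty,\infty\}$, $\text{\o}$ zero vector; $\wp(s)$ unit vector at coordinate $c(s)$; for a finite path the sum over vertices in $V$; infinite play: $\infty$ if won by player $0$, else $-\infty$. Addition componentwise, $x+\pm\infty=\pm\infty$. Order $\prec$: $-\infty$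 least, $\infty$ greatest; for distinct $p,p'\in\mathbb{Z}^d$ with $k$ the largest differing index, $p\prec p'$ iff ($k$ even, $p_k<p'_k$) or ($k$ odd, $p_k>p'_k$). Valuation: $\mathcal{V}_\sigma(\bot)=\text{\o}$, $\mathcal{V}_\sigma(s)=\min^\prec_\tau\max^\prec\{\wp(\pi)\mid\pi$ a play in $\mathcal{A}_\bot|_{\sigma,\tau}$ from $s\}$. $\sigma$ is reasonable if $\mathcal{A}_\bot|_\sigma$ has no $1$-dominated cycle. $S_\sigma$ is the set of edges $(s,t)\in E_0$ with $\mathcal{V}_\sigma(s)\prec\wp(s)+\mathcal{V}_\sigma(t)$ (strict improvements). *)

(* Defs.v *)
From mathcomp Require Import all_boot all_order all_algebra.
From Stdlib Require Import ClassicalEpsilon.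
Set Implicit Arguments. Unset Strict Implicit. Unset Printing Implicit Defensive.
Import Order.TTheory GRing.Theory Num.Theory.

(* Owner: [own v = false] means v ∈ V_0,
   [own v = true] means v ∈ V_1.
   The "every vertex has a successor" condition is a hypothesis of the theorem. *)
Record arena := Arena {
  vtx : finType;
  edge : rel vtx;
  own : vtx -> bool;
  ncol : nat;
  col : vtx -> 'I_ncol }.

Section ParityDefs.
Variable A : arena.
Notation V := (vtx A).
Notation E := (@edge A).
Notation o := (@own A).
Notation d := (ncol A).
Notation c := (@col A).

Definition infoften (g : nat -> nat) (k : nat) : Prop :=
  forall N, exists i, N <= i /\ g i = k.

Definition won0 (g : nat -> nat) : Prop :=
  exists k, infoften g k /\ ~~ odd k /\ forall k', infoften g k' -> k' <= k.

Definition pstrat0 (str : seq V -> V -> V) : Prop :=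
  forall h v, o v = false -> E v (str h v).

Definition consistent_play (str : seq V -> V -> V) (s : V) (f : nat -> V) : Prop :=
  f 0 = s /\ forall i, E (f i) (f i.+1) /\
    (o (f i) = false -> f i.+1 = str (mkseq f i) (f i)).

Definition W0 (s : V) : Prop :=
  exists str, pstrat0 str /\
    forall f, consistent_play str s f -> won0 (fun i => nat_of_ord (c (f i))).

(* ---------- escape arena A_⊥ : vertices option V, None = ⊥ ---------- *)
Definition eedge (u w : option V) : bool :=
  match u, w with
  | Some a, Some b => E a b
  | Some a, None => ~~ o a
  | None, _ => false
  end.

Definition E0 (u w : option V) : bool :=
  match u with Some a => ~~ o a && eedge u w | None => false end.

Definition E1 (u w : option V) : bool :=
  match u, w with Some a, Some b => o a && E a b | _, _ => false end.

Definition strat0 (sigma : rel (option V)) : Prop :=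
  (forall u w, sigma u w -> E0 u w) /\
  (forall s, o s = false -> exists t, sigma (Some s) t).

Definition strat1 (tau : rel (option V)) : Prop :=
  (forall u w, tau u w -> E1 u w) /\
  (forall s, o s = true -> exists t, tau (Some s) t).

(* colour of a vertex of A_⊥ (⊥ never lies on a cycle or infinite play) *)
Definition ocol (u : option V) : nat :=
  if u is Some v then nat_of_ord (c v) else 0.

Definition reasonable (sigma : rel (option V)) : Prop :=
  let G := fun u w => sigma u w || E1 u w in
  ~ exists (x : option V) (p : seq (option V)),
      [/\ p <> [::], path G x p, last x p = x &
          odd (foldr maxn 0 (map ocol (x :: p)))].

Inductive prof : Type :=
  | PNeg
  | PPos
  | PFin of {ffun 'I_d -> int}.

Definition pzero : prof := PFin [ffun _ => 0%R].

Definition padd (x y : prof) : prof :=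
  match x, y with
  | PFin a, PFin b => PFin [ffun j => (a j + b j)%R]
  | PFin _, _ => y
  | _, _ => x
  end.

Definition vprof (u : option V) : prof :=
  PFin [ffun j => Posz (if u is Some v then (c v == j : nat) else 0%N)].

Definition finprof (p : seq (option V)) : prof :=
  PFin [ffun j => Posz (count (fun u => if u is Some v then c v == j else false) p)].

Definition finlt (a b : {ffun 'I_d -> int}) : Prop :=
  exists k : 'I_d, (forall j : 'I_d, k < j -> a j = b j) /\ a k <> b k /\
    (if odd k then (b k < a k)%R else (a k < b k)%R).

Definition plt (x y : prof) : Prop :=
  match x, y with
  | PNeg, PNeg => False
  | PNeg, _ => True
  | PFin _, PNeg => False
  | PFin a, PFin b => finlt a b
  | PFin _, PPos => True
  | PPos, _ => False
  end.

Definition ple (x y : prof) : Prop := plt x y \/ x = y.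

Definition gst (sigma tau : rel (option V)) (u w : option V) : bool :=
  sigma u w || tau u w.

Definition play_prof (sigma tau : rel (option V)) (u : option V) (x : prof) : Prop :=
  (exists p : seq (option V),
      path (gst sigma tau) u p /\
      (forall w, ~~ gst sigma tau (last u p) w) /\
      x = finprof (u :: p)) \/
  (exists f : nat -> option V,
      f 0 = u /\ (forall i, gst sigma tau (f i) (f i.+1)) /\
      (won0 (fun i => ocol (f i)) -> x = PPos) /\
      (~ won0 (fun i => ocol (f i)) -> x = PNeg)).

Definition isMax (P : prof -> Prop) (x : prof) : Prop :=
  P x /\ forall y, P y -> ple y x.
Definition isMin (P : prof -> Prop) (x : prof) : Prop :=
  P x /\ forall y, P y -> ple x y.

Definition val_spec (sigma : rel (option V)) (s : V) (x : prof) : Prop :=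
  isMin (fun v => exists tau, strat1 tau /\ isMax (play_prof sigma tau (Some s)) v) x.

Definition Val (sigma : rel (option V)) (u : option V) : prof :=
  match u with
  | None => pzero
  | Some s => epsilon (inhabits PNeg) (val_spec sigma s)
  end.

Definition improvement (sigma : rel (option V)) (u w : option V) : Prop :=
  E0 u w /\ plt (Val sigma u) (padd (vprof u) (Val sigma w)).

End ParityDefs.

(* Main.v *)
Require Import Defs.
From mathcomp Require Import all_boot all_order all_algebra.
From Stdlib Require Import Classical ClassicalEpsilon FunctionalExtensionality.
Set Implicit Arguments. Unset Strict Implicit. Unset Printing Implicit Defensive.
Import Order.TTheory GRing.Theory Num.Theory.

Lemma max_exists (P : nat -> Prop) n :
  (exists k, P k) -> (forall k, P k -> k < n) ->
  exists k, P k /\ forall k', P k' -> k' <= k.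
Proof.
elim: n => [|n IH] [k Pk] Hb; first by have := Hb _ Pk.
case: (classic (P n)) => Pn.
  by exists n; split=> // k' /Hb; rewrite ltnS.
apply: IH; first by exists k.
move=> k' Pk'; have := Hb _ Pk'; rewrite ltnS leq_eqVlt; case/orP=> // /eqP E.
by subst.
Qed.

Section Ord.
Variable A : arena.
Notation vec := {ffun 'I_(ncol A) -> int}.

Definition vadd (x a : vec) : vec := [ffun j => (x j + a j)%R].

Lemma finlt_irr (a : vec) : ~ finlt a a.
Proof. by case=> k [_ [H _]]. Qed.

Lemma finlt_trans (a b c : vec) : finlt a b -> finlt b c -> finlt a c.
Proof.
move=> [k1 [H1 [N1 S1]]] [k2 [H2 [N2 S2]]].
case: (ltngtP k1 k2) => [lt12|lt21|/val_inj e].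
- exists k2; split.
    move=> j Hj; rewrite H1 ?H2 //; exact: ltn_trans Hj.
  have E := H1 _ lt12; rewrite E; by split.
- exists k1; split.
    move=> j Hj; rewrite H1 ?H2 //; exact: ltn_trans Hj.
  have E := H2 _ lt21; rewrite -E; by split.
- subst k2; exists k1; split; first by move=> j Hj; rewrite H1 ?H2.
  case: (odd k1) S1 S2 => S1 S2.
    have h : (c k1 < a k1)%R by apply: lt_trans S1.
    by split=> //; move=> E; rewrite E ltxx in h.
  have h : (a k1 < c k1)%R by apply: lt_trans S2.
  by split=> //; move=> E; rewrite E ltxx in h.
Qed.

Lemma finlt_total (a b : vec) : a = b \/ finlt a b \/ finlt b a.
Proof.
case: (classic (a = b)) => [->|ne]; first by left.
right.
have ex : exists k, exists H : k < ncol A, a (Ordinal H) <> b (Ordinal H).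
  apply: NNPP => nex; apply: ne; apply/ffunP => j.
  apply: NNPP => nj; apply: nex; exists j, (ltn_ord j).
  by rewrite -[Ordinal _]/(Ordinal (ltn_ord j)) (_ : Ordinal (ltn_ord j) = j) //; apply: val_inj.
have [k [[Hk Nk] Mk]] := max_exists ex (fun k '(ex_intro H _) => H).
set K := Ordinal Hk in Nk.
have above : forall j : 'I_(ncol A), K < j -> a j = b j.
  move=> j Hj; apply: NNPP => nj.
  have : ~~ (j <= k) by rewrite -ltnNge.
  move/negP; apply; apply: Mk; exists (ltn_ord j).
  by rewrite (_ : Ordinal (ltn_ord j) = j) //; apply: val_inj.
have ab : (a K < b K)%R \/ (b K < a K)%R.
  case: (ltgtP (a K) (b K)) => h; [left|right|] => //.
have bK : b K <> a K by move=> e; apply: Nk.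
case: (odd K) / idP => oK; case: ab => h.
- right; exists K; split; first by move=> j /above ->.
  by rewrite oK.
- left; exists K; split=> //; by rewrite oK.
- left; exists K; split=> //; by rewrite (negbTE (introN idP oK)).
- right; exists K; split; first by move=> j /above ->.
  by rewrite (negbTE (introN idP oK)).
Qed.

Lemma finlt_add (x a b : vec) : finlt a b -> finlt (vadd x a) (vadd x b).
Proof.
move=> [k [H [N S]]]; exists k; rewrite !ffunE; split.
  by move=> j /H; rewrite !ffunE => ->.
split; first by move/addrI.
by case: (odd k) S; rewrite ltrD2l.
Qed.

Lemma vadd0 (a : vec) : vadd [ffun _ => 0%R] a = a.
Proof. by apply/ffunP => j; rewrite !ffunE add0r. Qed.

Lemma vaddA (x y a : vec) : vadd x (vadd y a) = vadd (vadd x y) a.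
Proof. by apply/ffunP => j; rewrite !ffunE addrA. Qed.

Lemma plt_trans (x y z : prof A) : plt x y -> plt y z -> plt x z.
Proof.
case: x => [||a]; case: y => [||b]; case: z => [||c] //=.
exact: finlt_trans.
Qed.

Lemma plt_irr (x : prof A) : ~ plt x x.
Proof. case: x => [||a] //=; exact: finlt_irr. Qed.

Lemma ple_trans (x y z : prof A) : ple x y -> ple y z -> ple x z.
Proof.
move=> [h1|->] [h2|<-]; rewrite /ple; auto.
left; exact: plt_trans h2.
Qed.

Lemma plt_ple_trans (x y z : prof A) : plt x y -> ple y z -> plt x z.
Proof. by move=> h [h2|<-] //; exact: plt_trans h2. Qed.

Lemma ple_plt_trans (x y z : prof A) : ple x y -> plt y z -> plt x z.
Proof. by move=> [h|->] h2 //; exact: plt_trans h2. Qed.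

Lemma ple_total (x y : prof A) : ple x y \/ plt y x.
Proof.
case: x => [||a]; case: y => [||b] /=; rewrite /ple /=; auto.
case: (finlt_total a b) => [->|[h|h]]; auto.
Qed.

Lemma ple_total2 (x y : prof A) : ple x y \/ ple y x.
Proof. case: (ple_total x y); rewrite /ple; auto. Qed.

Lemma ple_antisym (x y : prof A) : ple x y -> ple y x -> x = y.
Proof.
move=> [h|->] // [h2|->] //; case: (plt_irr (plt_trans h h2)).
Qed.

Lemma nplt_ple (x y : prof A) : ~ plt x y -> ple y x.
Proof. by case: (ple_total y x). Qed.

Lemma ple_PPos (x : prof A) : ple x (PPos A).
Proof. by case: x => [||a]; rewrite /ple /=; auto. Qed.

Lemma padd_ple (a : vec) (x y : prof A) : ple x y -> ple (padd (PFin a) x) (padd (PFin a) y).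
Proof.
move=> [h|->]; last by right.
case: x h => [||b]; case: y => [||c] //= h; rewrite /ple /=; auto.
left; exact: finlt_add.
Qed.

End Ord.

Lemma list_max (X : Type) (le : X -> X -> Prop)
  (tot : forall x y, le x y \/ le y x) (tr : forall x y z, le x y -> le y z -> le x z)
  (Q : X -> Prop) (l : seq X) :
  (exists x, List.In x l /\ Q x) ->
  exists m, Q m /\ List.In m l /\ forall y, List.In y l -> Q y -> le y m.
Proof.
elim: l => [|a l IH] [x [Hx Qx]] //=.
case: (classic (exists x, List.In x l /\ Q x)) => [ex|nex].
  have [m [Qm [Im Hm]]] := IH ex.
  case: (classic (Q a)) => Qa.
    case: (tot a m) => h.
      exists m; split=> //; split; first by right.
      by move=> y [<-|Iy] Qy //; apply: Hm.
    exists a; split=> //; split; first by left.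
    move=> y [<-|Iy] Qy; first by case: (tot a a).
    exact: tr (Hm _ Iy Qy) h.
  exists m; split=> //; split; first by right.
  by move=> y [<-|Iy] Qy //; apply: Hm.
case: Hx => [Ex|Ix]; last by case: nex; exists x.
subst x; exists a; split=> //; split; first by left.
move=> y [<-|Iy] Qy; first by case: (tot a a).
by case: nex; exists y.
Qed.


Lemma not_infoften g k : ~ infoften g k -> exists N, forall i, N <= i -> g i <> k.
Proof.
move=> h; apply: NNPP => nex; apply: h => N; apply: NNPP => ne; apply: nex.
exists N => i Hi E; apply: ne; by exists i.
Qed.

Lemma ev_bound (g : nat -> nat) d b : (forall i, g i < d) ->
  (forall k, b <= k -> ~ infoften g k) -> exists N, forall i, N <= i -> g i < b.
Proof.
move=> Hd Hb.
have key : forall m, exists N, forall i, N <= i -> g i < b \/ b + m <= g i.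
  elim=> [|m [N HN]].
    exists 0 => i _; rewrite addn0; case: (ltnP (g i) b); auto.
  have [N' HN'] := not_infoften (Hb (b + m) (leq_addr _ _)).
  exists (maxn N N') => i Hi.
  rewrite geq_max in Hi; case/andP: Hi => h1 h2.
  case: (HN i h1) => h; first by left.
  right; rewrite addnS ltn_neqAle h andbT eq_sym; apply/eqP; exact: HN'.
have [N HN] := key d; exists N => i Hi; case: (HN i Hi) => // h.
have := Hd i; rewrite ltnNge (leq_trans (leq_addl _ _) h) //.
Qed.

Lemma infoften_max (g : nat -> nat) d : (forall i, g i < d) ->
  exists k, infoften g k /\ forall k', infoften g k' -> k' <= k.
Proof.
move=> Hd; apply: (@max_exists _ d).
  apply: NNPP => nex.
  have [N HN] := ev_bound Hd (b := 0) (fun k _ h => nex (ex_intro _ k h)).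
  by have := HN N (leqnn N).
move=> k h; have [i [_ <-]] := h 0; exact: Hd.
Qed.

Lemma cycle_find (X : finType) (f : nat -> X) (g : nat -> nat) k N :
  infoften g k -> exists i j, [/\ N <= i, i < j, f i = f j & g i = k].
Proof.
move=> Hk.
have [nxt Hnxt] : exists nxt : nat -> nat, forall n, n <= nxt n /\ g (nxt n) = k.
  exists (fun n => proj1_sig (constructive_indefinite_description _ (Hk n))).
  by move=> n; case: constructive_indefinite_description.
pose occ m := iter m (fun x => nxt x.+1) (nxt N).
have occS : forall m, occ m < occ m.+1.
  move=> m; rewrite /occ iterS; set y := iter m _ _.
  by have [h _] := Hnxt y.+1.
have occk : forall m, g (occ m) = k.
  by case=> [|m]; rewrite /occ ?iterS; [have [_ h] := Hnxt N|have [_ h] := Hnxt (iter m (fun x => nxt x.+1) (nxt N)).+1].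
have occN : forall m, N <= occ m.
  elim=> [|m IH]; first by have [h _] := Hnxt N.
  exact: leq_trans IH (ltnW (occS m)).
have mono := homo_ltn ltn_trans occS.
pose F (m : 'I_(#|X|.+1)) := f (occ m).
have ninj : ~ injective F.
  move=> /leq_card; rewrite card_ord ltnn //.
have [m1 [m2 [ne E]]] : exists m1 m2, m1 <> m2 /\ F m1 = F m2.
  apply: NNPP => nex; apply: ninj => m1 m2 E; apply: NNPP => ne.
  by apply: nex; exists m1, m2.
have : (m1 : nat) <> m2 by move=> e; apply: ne; apply: val_inj.
case: (ltngtP m1 m2) => // h _.
  by exists (occ m1), (occ m2); split=> //; apply: mono.
by exists (occ m2), (occ m1); split=> //; apply: mono.
Qed.


Lemma foldr_max_le (l : seq nat) k : (forall y, y \in l -> y <= k) -> foldr maxn 0 l <= k.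
Proof.
elim: l => [|a l IH] H //=; rewrite geq_max H ?mem_head //= IH // => y Hy.
by apply: H; rewrite in_cons Hy orbT.
Qed.

Lemma foldr_max_ge (l : seq nat) y : y \in l -> y <= foldr maxn 0 l.
Proof.
elim: l => [|a l IH] //=; rewrite in_cons leq_max; case/orP=> [/eqP->|/IH->];
  by rewrite ?leqnn ?orbT.
Qed.

Section Game.
Variable A : arena.
Notation V := (vtx A).
Variable sigma : rel (option V).
Hypothesis Hsigma : strat0 sigma.
Hypothesis Hreas : reasonable sigma.

Lemma gst_some tau u w : strat1 tau -> gst sigma tau u w -> exists a, u = Some a.
Proof.
move=> [Ht _]; case: u => [a|]; first by exists a.
by case/orP=> [/(proj1 Hsigma)|/Ht].
Qed.

Lemma gst_E1 tau u w : strat1 tau -> gst sigma tau u w -> sigma u w || E1 u w.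
Proof. by move=> [Ht _] /orP[->|/Ht ->] //; rewrite orbT. Qed.

Lemma won_inf tau (f : nat -> option V) : strat1 tau ->
  (forall i, gst sigma tau (f i) (f i.+1)) -> won0 (fun i => ocol (f i)).
Proof.
move=> Htau Hf.
have Hd : forall i, ocol (f i) < ncol A.
  by move=> i; have [a ->] := gst_some Htau (Hf i); exact: ltn_ord.
have [k [Ik Mk]] := infoften_max Hd.
exists k; split=> //; split=> //.
apply/negP => ok.
have Hb : forall k', k.+1 <= k' -> ~ infoften (fun i => ocol (f i)) k'.
  by move=> k' hk /Mk h2; rewrite leqNgt hk in h2.
have [N HN] := ev_bound Hd Hb.
have [i [j [Ni ij Eij Ci]]] := cycle_find f N Ik.
apply: Hreas.
exists (f i), (mkseq (fun t => f (i + t.+1)) (j - i)).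
have sz : size (mkseq (fun t => f (i + t.+1)) (j - i)) = j - i by rewrite size_mkseq.
have nth0 : forall t, t <= j - i ->
   nth None (f i :: mkseq (fun t => f (i + t.+1)) (j - i)) t = f (i + t).
  case=> [|t] Ht /=; first by rewrite addn0.
  by rewrite nth_mkseq // addnS.
split.
- move=> E; have := congr1 size E; rewrite sz /= => /eqP; by rewrite subn_eq0 leqNgt ij.
- apply/(pathP None) => t; rewrite sz => Ht.
  rewrite nth0 ?(ltnW Ht) // nth_mkseq //.
  rewrite addnS.
  exact: gst_E1 Htau (Hf _).
- rewrite (last_nth None) sz nth0 // subnKC ?(ltnW ij) //.
- suff -> : foldr maxn 0 [seq ocol i | i <- f i :: mkseq (fun t => f (i + t.+1)) (j - i)] = k by [].
  apply/eqP; rewrite eqn_leq; apply/andP; split.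
    apply: foldr_max_le => y /mapP [z Hz ->].
    move: Hz => /(nthP None) [t]; rewrite /= sz ltnS => Ht <-.
    rewrite nth0 //; have := HN (i + t) (leq_trans Ni (leq_addr _ _)); by rewrite ltnS.
  by apply: foldr_max_ge; rewrite -Ci; apply: map_f; exact: mem_head.
Qed.
End Game.


Lemma mem_In (T : eqType) (x : T) (l : seq T) : x \in l -> List.In x l.
Proof. elim: l => [|a l IH] //=; rewrite in_cons => /orP[/eqP->|/IH]; auto. Qed.

Fixpoint allseqs (T : finType) (n : nat) : seq (seq T) :=
  if n is n'.+1 then [::] :: flatten [seq [seq x :: s | s <- allseqs T n'] | x <- enum T]
  else [:: [::]].

Lemma allseqsP (T : finType) n (s : seq T) : size s <= n -> List.In s (allseqs T n).
Proof.
elim: n s => [|n IH] [|x s] //=; first by left.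
  by left.
rewrite ltnS => Hs; right.
apply: mem_In; apply/flattenP.
exists [seq x :: s | s <- allseqs T n]; first by apply: map_f; rewrite mem_enum.
apply: map_f.
have := IH _ Hs; elim: (allseqs T n) => [|a l IH2] //= [->|h]; rewrite in_cons ?eqxx //.
by rewrite IH2 ?orbT.
Qed.

Section Game.
Variable A : arena.
Notation V := (vtx A).
Variable sigma : rel (option V).
Hypothesis Hsigma : strat0 sigma.
Hypothesis Hreas : reasonable sigma.

Lemma max_play tau u : strat1 tau -> exists M, isMax (play_prof sigma tau u) M.
Proof.
move=> Htau.
set G := gst sigma tau.
case: (classic (exists S : option V -> Prop, S u /\ forall x, S x -> exists y, S y /\ G x y)).
  move=> [S [Su HS]].
  pose nx x := epsilon (inhabits u) (fun y => S y /\ G x y).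
  pose f n := iter n nx u.
  have Sf : forall n, S (f n).
    elim=> [|n IH] //; rewrite /f /=.
    by have := epsilon_spec (inhabits u) _ (HS _ IH); case.
  have Gf : forall n, G (f n) (f n.+1).
    move=> n; rewrite /f /=.
    by have := epsilon_spec (inhabits u) _ (HS _ (Sf n)); case.
  exists (PPos A); split; last by move=> y _; apply: ple_PPos.
  right; exists f; split=> //; split=> //; split=> // nw.
  by case: nw; apply: (won_inf Hsigma Hreas Htau).
move=> noS.
have bound : forall p, path G u p -> size p < #|{: option V}|.
  move=> p Hp; rewrite ltnNge; apply/negP => big.
  have nu : ~~ uniq (u :: p).
    apply/negP => un; move: (card_uniqP un) => e.
    have := max_card (mem (u :: p)); rewrite e /=; rewrite ltnNge big //.
  case/(uniqPn u): nu => i [j [ij js Eij]].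
  apply: noS; exists (fun y => exists t, t < j /\ nth u (u :: p) t = y).
  split; first by exists 0; split=> //; exact: leq_ltn_trans ij.
  move=> x [t [tj <-]].
  have tp : t < size p by rewrite -ltnS; exact: leq_trans js.
  have := (pathP u Hp) t tp => g.
  case: (ltnP t.+1 j) => h.
    by exists (nth u p t); split=> //; exists t.+1.
  have tj' : t.+1 = j by apply/eqP; rewrite eqn_leq h tj.
  exists (nth u p t); split=> //; exists i; split=> //.
  by rewrite Eij -tj'.
have noinf : forall f : nat -> option V, f 0 = u -> ~ (forall i, G (f i) (f i.+1)).
  move=> f f0 Hf; apply: noS; exists (fun y => exists i, f i = y); split.
    by exists 0.
  by move=> x [i <-]; exists (f i.+1); split=> //; exists i.+1.
set N := #|{: option V}|.
have [m [Pm [_ Mm]]] := list_max (le := fun p q : seq (option V) => size p <= size q)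
  (fun p q => orP (leq_total (size p) (size q))) (fun p q r h1 h2 => leq_trans h1 h2)
  (Q := fun p => path G u p) (l := allseqs _ N) (ex_intro _ [::] (conj (@allseqsP _ N [::] (leq0n N)) isT)).
have maxm : forall w, ~~ G (last u m) w.
  move=> w; apply/negP => g.
  have Pm' : path G u (rcons m w) by rewrite rcons_path Pm.
  have := Mm _ (allseqsP (ltnW (bound _ Pm'))) Pm'.
  by rewrite size_rcons ltnn.
have [M [[PM1 PM2] [_ MM]]] := list_max
  (le := fun p q : seq (option V) => ple (finprof (u :: p)) (finprof (u :: q)))
  (fun p q => ple_total2 _ _) (fun p q r => @ple_trans _ _ _ _)
  (Q := fun p => path G u p /\ forall w, ~~ G (last u p) w) (l := allseqs _ N)
  (ex_intro _ m (conj (allseqsP (ltnW (bound _ Pm))) (conj Pm maxm))).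
exists (finprof (u :: M)); split.
  by left; exists M.
move=> y [[p [Pp [Mp ->]]]|[f [f0 [Gf _]]]].
  exact: MM (allseqsP (ltnW (bound _ Pp))) (conj Pp Mp).
by case: (noinf f f0 Gf).
Qed.

End Game.


Section Game.
Variable A : arena.
Notation V := (vtx A).
Hypothesis Hsucc : forall v : V, exists w, edge v w.
Variable sigma : rel (option V).
Hypothesis Hsigma : strat0 sigma.
Hypothesis Hreas : reasonable sigma.

Lemma isMax_uniq (P : prof A -> Prop) x y : isMax P x -> isMax P y -> x = y.
Proof. by move=> [Px Hx] [Py Hy]; apply: ple_antisym; [apply: Hy|apply: Hx]. Qed.

Lemma val_ex s : exists x, val_spec sigma s x.
Proof.
pose T := {ffun option V * option V -> bool}.
pose rt (t : T) : rel (option V) := fun u w => t (u, w).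
pose Mx (t : T) := epsilon (inhabits (PPos A)) (isMax (play_prof sigma (rt t) (Some s))).
have MxP : forall t, strat1 (rt t) -> isMax (play_prof sigma (rt t) (Some s)) (Mx t).
  move=> t h; apply: epsilon_spec; exact: max_play.
have rtK : forall tau : rel (option V), rt [ffun p => tau p.1 p.2] = tau.
  move=> tau; apply: functional_extensionality => u; apply: functional_extensionality => w.
  by rewrite /rt ffunE.
have st1 : strat1 (@E1 A).
  split=> // a oa; have [w hw] := Hsucc a; exists (Some w); by rewrite /E1 oa.
have st1' : strat1 (rt [ffun p => @E1 A p.1 p.2]) by rewrite rtK.
have [t [Qt [_ Mt]]] := list_max (le := fun t1 t2 : T => ple (Mx t2) (Mx t1))
  (fun p q => ple_total2 _ _) (fun p q r h1 h2 => ple_trans h2 h1)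
  (Q := fun t => strat1 (rt t)) (l := enum T)
  (ex_intro _ [ffun p => @E1 A p.1 p.2] (conj (mem_In (mem_enum _ _)) st1')).
exists (Mx t); split.
  by exists (rt t); split=> //; apply: MxP.
move=> y [tau [Htau Hy]].
have e := rtK tau.
have Ht' : strat1 (rt [ffun p => tau p.1 p.2]) by rewrite e.
have := MxP _ Ht'; rewrite e => Hm.
rewrite (isMax_uniq Hy Hm).
exact: Mt (mem_In (mem_enum _ _)) Ht'.
Qed.

Lemma Val_spec s : val_spec sigma s (Val sigma (Some s)).
Proof. rewrite /Val; apply: epsilon_spec; exact: val_ex. Qed.

Lemma Val_not_neg u : Val sigma u <> PNeg A.
Proof.
case: u => [s|] //.
have [[tau [Htau [Pv _]]] _] := Val_spec s.
move=> E; rewrite E in Pv.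
case: Pv => [[p [_ [_ //]]]|[f [_ [Hf [Hw _]]]]].
by have := Hw (won_inf Hsigma Hreas Htau Hf).
Qed.

Lemma infoften_shift g k x : infoften g k <-> infoften (fun n => if n is n'.+1 then g n' else x) k.
Proof.
split=> h N.
  have [i [Hi E]] := h N; exists i.+1; split=> //; exact: leqW.
have [i [Hi E]] := h N.+1; case: i Hi E => // i Hi E; exists i; split=> //.
Qed.

Lemma won0_shift g x : won0 g <-> won0 (fun n => if n is n'.+1 then g n' else x).
Proof.
split.
  move=> [k [Ik [ok Mk]]]; exists k; split; first exact: (proj1 (infoften_shift g k x) Ik).
  split=> // k' h; apply: Mk; exact: (proj2 (infoften_shift g k' x) h).
move=> [k [Ik [ok Mk]]]; exists k; split; first exact: (proj2 (infoften_shift g k x) Ik).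
split=> // k' h; apply: Mk; exact: (proj1 (infoften_shift g k' x) h).
Qed.

Lemma play_ext tau a w y : gst sigma tau (Some a) w -> play_prof sigma tau w y ->
  play_prof sigma tau (Some a) (padd (vprof (Some a)) y).
Proof.
move=> g [[p [Pp [Mp ->]]]|[f [f0 [Gf [W1 W2]]]]].
  left; exists (w :: p); split; first by rewrite /= g.
  split=> //; congr PFin; apply/ffunP => j; rewrite !ffunE /=.
  by rewrite PoszD.
right; exists (fun n => if n is n'.+1 then f n' else Some a); split=> //; split.
  by case=> [|n] //=; rewrite f0.
have e : (fun i => ocol (if i is n'.+1 then f n' else Some a)) =
         (fun i => if i is n'.+1 then ocol (f n') else ocol (Some a)).
  by apply: functional_extensionality; case.
rewrite e; split.
  by move=> h; rewrite W1 //; apply/(won0_shift _ (ocol (Some a))).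
move=> h; rewrite W2 // => h2; apply: h; exact: (proj1 (won0_shift _ _) h2).
Qed.

Lemma V1_step a : own a ->
  exists b, edge a b /\ ple (padd (vprof (Some a)) (Val sigma (Some b))) (Val sigma (Some a)).
Proof.
move=> oa.
have [[tau [Htau [Pv Mv]]] _] := Val_spec a.
have [t ht] := (proj2 Htau) a oa.
have := (proj1 Htau) _ _ ht; case: t ht => [b|] // ht; rewrite /E1 oa /= => eab.
exists b; split=> //.
have [Mb [PMb HMb]] := max_play Hsigma Hreas (Some b) Htau.
have [_ minb] := Val_spec b.
have h1 := minb Mb (ex_intro _ tau (conj Htau (conj PMb HMb))).
apply: ple_trans (padd_ple _ h1) _.
apply: Mv; apply: play_ext PMb; by rewrite /gst ht orbT.
Qed.

End Game.


Definition nxtv (A : arena) (s0 : vtx A) (ch : vtx A -> vtx A)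
  (str : seq (vtx A) -> vtx A -> vtx A) (h : seq (vtx A)) : vtx A :=
  let v := last s0 h in if own v then ch v else str (take (size h).-1 h) v.

Fixpoint pre (A : arena) (s0 : vtx A) ch str (n : nat) : seq (vtx A) :=
  if n is n'.+1 then rcons (pre s0 ch str n') (nxtv s0 ch str (pre s0 ch str n'))
  else [:: s0].

Lemma vaddC (A : arena) (x y : {ffun 'I_(ncol A) -> int}) : vadd x y = vadd y x.
Proof. by apply/ffunP => j; rewrite !ffunE addrC. Qed.

Lemma vaddr0 (A : arena) (x : {ffun 'I_(ncol A) -> int}) : vadd x [ffun _ => 0%R] = x.
Proof. by apply/ffunP => j; rewrite !ffunE addr0. Qed.

Theorem mainTheorem10 (A : arena)
  (Hsucc : forall v : vtx A, exists w, edge v w)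
  (sigma : rel (option (vtx A)))
  (Hsigma : strat0 sigma)
  (Hreas : reasonable sigma)
  (Hex : exists s : vtx A, W0 s /\ plt (Val sigma (Some s)) (PPos A)) :
  exists u w : option (vtx A), improvement sigma u w.
Proof.
apply: NNPP => noimp.
have noimp' : forall u w, ~ improvement sigma u w by move=> u w h; apply: noimp; exists u, w.
have [s0 [[str [Hstr Hwin]] Hlt]] := Hex.
have V0step : forall a b, ~~ own a -> edge a b ->
    ple (padd (vprof (Some a)) (Val sigma (Some b))) (Val sigma (Some a)).
  move=> a b oa eab; apply: nplt_ple => h; apply: (noimp' (Some a) (Some b)); split=> //.
  by rewrite /E0 /= oa eab.
pose ch a := epsilon (inhabits a) (fun b => edge a b /\
   ple (padd (vprof (Some a)) (Val sigma (Some b))) (Val sigma (Some a))).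
have chP : forall a, own a -> edge a (ch a) /\
   ple (padd (vprof (Some a)) (Val sigma (Some (ch a)))) (Val sigma (Some a)).
  move=> a oa; exact: (epsilon_spec (inhabits a) _ (V1_step Hsucc Hsigma Hreas oa)).
pose f i := last s0 (pre s0 ch str i).
have preE : forall n, pre s0 ch str n = mkseq f n.+1.
  elim=> [|n IH] //=.
  by rewrite mkseqS -IH /f /= last_rcons.
have fS : forall n, f n.+1 = nxtv s0 ch str (mkseq f n.+1).
  by move=> n; rewrite /f /= last_rcons preE.
have fS' : forall n, f n.+1 = if own (f n) then ch (f n) else str (mkseq f n) (f n).
  move=> n; rewrite fS /nxtv mkseqS last_rcons size_rcons size_mkseq -pred_Sn.
  by rewrite -{3}(size_mkseq f n) -cats1 take_size_cat.
have cons : consistent_play str s0 f.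
  split=> // i; rewrite fS'.
  case oi: (own (f i)); last by split=> //; apply: Hstr.
  by split=> //; case: (chP _ oi).
have Hw := Hwin f cons.
pose a i := Val sigma (Some (f i)).
have step : forall i, ple (padd (vprof (Some (f i))) (a i.+1)) (a i).
  move=> i; rewrite /a fS'; case oi: (own (f i)); first by case: (chP _ oi).
  apply: V0step; first by rewrite oi.
  by apply: Hstr; rewrite oi.
have notpos : forall i, a i <> PPos A.
  elim=> [|i IH] E.
    have a0 : a 0 = Val sigma (Some s0) by [].
    by rewrite -a0 E in Hlt; case: (plt_irr Hlt).
  apply: IH; have := step i; rewrite E /=; move=> [h|<-] //; move: h; by case: (a i).
pose v i := if a i is PFin x then x else [ffun _ => 0%R].
have av : forall i, a i = PFin (v i).
  move=> i; rewrite /v; case E: (a i) => //; first by case: (Val_not_neg Hsucc Hsigma Hreas E).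
  by case: (notpos i).
pose ev i : {ffun 'I_(ncol A) -> int} := [ffun j => Posz (Defs.col (f i) == j)].
have stepv : forall i, ple (PFin (vadd (ev i) (v i.+1))) (PFin (v i)).
  move=> i; have := step i; rewrite !av.
  suff -> : padd (vprof (Some (f i))) (PFin (v i.+1)) = PFin (vadd (ev i) (v i.+1)) by [].
  by rewrite /= /vadd; congr PFin; apply/ffunP => j; rewrite !ffunE.
pose S i n : {ffun 'I_(ncol A) -> int} :=
  [ffun j => Posz (count (fun l => Defs.col (f l) == j) (iota i n))].
have seg : forall i n, ple (PFin (vadd (S i n) (v (i + n)))) (PFin (v i)).
  move=> i; elim=> [|n IH].
    rewrite addn0; right; congr PFin; apply/ffunP => j; by rewrite !ffunE add0r.
  have e : S i n.+1 = vadd (S i n) (ev (i + n)).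
    apply/ffunP => j; rewrite !ffunE -addn1 iotaD count_cat /= addn0 PoszD.
    done.
  rewrite e -vaddA addnS.
  apply: ple_trans IH; exact: padd_ple (stepv (i + n)).
have Hd : forall i, nat_of_ord (Defs.col (f i)) < ncol A by move=> i; exact: ltn_ord.
have [k [Ik [ok Mk]]] := Hw.
have Hb : forall k', k.+1 <= k' -> ~ infoften (fun i => nat_of_ord (Defs.col (f i))) k'.
  by move=> k' hk /Mk h2; rewrite leqNgt hk in h2.
have [N HN] := ev_bound Hd Hb.
have [i [j [Ni ij Eij Ci]]] := cycle_find f N Ik.
have sg := seg i (j - i); rewrite subnKC ?(ltnW ij) // in sg.
have vij : v j = v i by rewrite /v /a Eij.
rewrite vij in sg.
set K := Defs.col (f i).
have lt0 : finlt [ffun _ => 0%R] (S i (j - i)).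
  exists K; split.
    move=> j' Hj'; rewrite !ffunE; apply/eqP; rewrite eq_sym -[0%R]/(Posz 0) eqz_nat.
    rewrite -leqn0 leqNgt -has_count; apply/hasPn => l; rewrite mem_iota => /andP [h1 _].
    apply/negP => /eqP E.
    have := HN l (leq_trans Ni h1); rewrite E ltnS => h.
    by rewrite /K Ci ltnNge h in Hj'.
  have pos : (0 < S i (j - i)%N K)%R.
    rewrite ffunE ltz_nat -has_count; apply/hasP; exists i; last by [].
    by rewrite mem_iota leqnn /= addnC subnK ?(ltnW ij).
  split; first by rewrite ffunE => E; rewrite -E ltxx in pos.
  by rewrite /K Ci (negbTE ok) ffunE.
have lt1 := finlt_add (v i) lt0.
rewrite vaddr0 vaddC in lt1.
have lt2 : plt (PFin (v i)) (PFin (vadd (S i (j - i)%N) (v i))) := lt1.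
have : plt (PFin (v i)) (PFin (v i)) by exact: plt_ple_trans lt2 sg.
exact: plt_irr.
Qed.
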